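(* Let $P$ be a finite poset with $b$ bottlenecks, and let $\mathcal{S}$ denote the set of all convex subsets of $P$ with exactly one interior element. Then $$\sum_{S\in\mathcal{S}}(-1)^{|S|}=-b.$$
   Context: A subset $I\subseteq P$ is an order ideal if $x\in I$ and $y\le x$ imply $y\in I$; a subset $J\subseteq P$ is an order filter if $x\in J$ and $y\ge x$ imply $y\in J$. A subset $C\subseteq P$ is convex (in the double shelling antimatroid of $P$) if $C=P\setminus(I\cup J)$ for some order ideal $I$ and order filter $J$. An element $x$ of a convex set $C$ is interior to $C$ if it is neither a minimal nor a maximal element of $C$ (equivalently, there are $a,c\in C$ with $a<x<c$). A bottleneck of $P$ is an element that is neither maximal nor minimal in $P$ but is comparable to every element of $P$. *)

(* Defs.v *)
From HB Require Import structures.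
From mathcomp Require Import all_boot all_order all_algebra.
Set Implicit Arguments. Unset Strict Implicit. Unset Printing Implicit Defensive.
Import Order.TTheory GRing.Theory Num.Theory.
Local Open Scope order_scope.

Section Defs.
Context {d : Order.disp_t} {T : finPOrderType d}.

Definition order_ideal (I : {set T}) : bool :=
  [forall x, forall y, (x \in I) && (y <= x) ==> (y \in I)].

Definition order_filter (J : {set T}) : bool :=
  [forall x, forall y, (x \in J) && (x <= y) ==> (y \in J)].

(* C is convex in the double shelling antimatroid: C = P \ (I u J). *)
Definition ds_convex (C : {set T}) : bool :=
  [exists I : {set T}, exists J : {set T},
     [&& order_ideal I, order_filter J & C == ~: (I :|: J)]].

Definition interior_elt (C : {set T}) (x : T) : bool :=
  (x \in C) && [exists a, [exists c, [&& a \in C, c \in C, a < x & x < c]]].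

Definition interior (C : {set T}) : {set T} := [set x | interior_elt C x].

Definition bottleneck (x : T) : bool :=
  [exists a, a < x] && [exists c, x < c] && [forall y, x >=< y].

Definition bottlenecks : {set T} := [set x | bottleneck x].
End Defs.

(* Main.v *)
Require Import Defs.
From HB Require Import structures.
From mathcomp Require Import all_boot all_order all_algebra.
From mathcomp Require Import zify.
Import Order.TTheory GRing.Theory Num.Theory.

Section Aux.
Context {d : Order.disp_t} {T : finPOrderType d}.
Local Open Scope order_scope.
Implicit Types (W S A : {set T}) (x y z e : T).

Definition convW W S := [forall a, forall c, forall y,
  ((a \in S) && (c \in S) && (y \in W) && (a < y) && (y < c)) ==> (y \in S)].

Lemma convWP W S : reflect (forall a c y, a \in S -> c \in S -> y \in W -> a < y -> y < c -> y \in S) (convW W S).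
Proof.
apply: (iffP forallP) => [H a c y aS cS yW ay yc| H a].
  by move/forallP: (H a) => /(_ c) /forallP /(_ y); rewrite aS cS yW ay yc.
apply/forallP => c; apply/forallP => y; apply/implyP => /andP[/andP[/andP[/andP[aS cS] yW] ay] yc].
exact: H aS cS yW ay yc.
Qed.

Lemma interiorP S x : reflect (x \in S /\ exists a c, [/\ a \in S, c \in S, a < x & x < c]) (x \in interior S).
Proof.
rewrite inE /interior_elt; apply: (iffP andP) => [[xS /existsP[a /existsP[c /and4P[? ? ? ?]]]]|[xS [a [c [? ? ? ?]]]]].
  by split=> //; exists a, c.
split=> //; apply/existsP; exists a; apply/existsP; exists c; exact/and4P.
Qed.

Lemma interior0P S : reflect (forall a x c, a \in S -> x \in S -> c \in S -> a < x -> x < c -> False) (interior S == set0).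
Proof.
apply: (iffP eqP) => [H a x c aS xS cS ax xc| H].
  have : x \in interior S by apply/interiorP; split=> //; exists a, c.
  by rewrite H inE.
apply/setP => x; rewrite in_set0; apply/negbTE/negP => /interiorP[xS [a [c [aS cS ax xc]]]].
exact: H aS xS cS ax xc.
Qed.

Lemma interior_sub A S : A \subset S -> interior A \subset interior S.
Proof.
move=> /subsetP AS; apply/subsetP => x /interiorP[xA [a [c [aA cA ax xc]]]].
apply/interiorP; split; first exact: AS; exists a, c; split=> //; exact: AS.
Qed.

Definition GW W S := [&& S \subset W, convW W S & interior S == set0].

Definition sg S : int := ((-1) ^+ #|S|)%R.

Definition tog S e := if e \in S then S :\ e else e |: S.

Lemma in_tog S e y : (y \in tog S e) = (if y == e then e \notin S else y \in S).
Proof.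
rewrite /tog; case: ifP => eS; rewrite !inE; case: eqP => [->|] //=; by rewrite eS.
Qed.

Lemma togK S e : tog (tog S e) e = S.
Proof.
apply/setP => y; rewrite in_tog; case: eqP => [->|ne]; first by rewrite in_tog eqxx negbK.
by rewrite in_tog; case: eqP ne.
Qed.

Lemma sg_tog S e : sg (tog S e) = (- sg S)%R.
Proof.
rewrite /sg /tog; case: ifP => eS.
  by rewrite (cardsD1 e S) eS add1n exprS mulN1r opprK.
by rewrite cardsU1 eS add1n exprS mulN1r.
Qed.

Lemma ex_max A : A != set0 -> exists2 e, e \in A & forall y, y \in A -> ~~ (e < y).
Proof.
case/set0Pn => a aA.
pose F := fun e => #|[set y in A | e < y]|.
case: (arg_minnP F aA) => e eA Hmin.
exists e => // y yA; apply/negP => ey.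
have := Hmin y yA; rewrite /F leqNgt => /negP; apply; apply: proper_card.
apply/properP; split.
  apply/subsetP => z; rewrite !inE => /andP[zA yz]; rewrite zA; exact: lt_trans ey yz.
by exists y; rewrite !inE ?yA ?ey ?ltxx.
Qed.

Lemma ex_min A : A != set0 -> exists2 e, e \in A & forall y, y \in A -> ~~ (y < e).
Proof.
case/set0Pn => a aA.
pose F := fun e => #|[set y in A | y < e]|.
case: (arg_minnP F aA) => e eA Hmin.
exists e => // y yA; apply/negP => ey.
have := Hmin y yA; rewrite /F leqNgt => /negP; apply; apply: proper_card.
apply/properP; split.
  apply/subsetP => z; rewrite !inE => /andP[zA yz]; rewrite zA; exact: lt_trans yz ey.
by exists y; rewrite !inE ?yA ?ey ?ltxx.
Qed.

Definition Dn W S := [set y in W | [exists s in S, y < s]].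
Definition CandOf (D : {set T}) := [set e in D | [forall y in D, ~~ (e < y)]].

Lemma sum_inv (P : pred {set T}) (f : {set T} -> {set T}) :
  (forall S, P S -> P (f S) /\ f (f S) = S /\ sg (f S) = (- sg S)%R) ->
  (\sum_(S | P S) sg S = 0)%R.
Proof.
move=> H.
pose g S := if P S then f S else S.
have gK : involutive g.
  move=> S; rewrite {2}/g; case: ifP => PS; last by rewrite /g PS.
  by case: (H S PS) => Pf [ff _]; rewrite /g Pf ff.
have Pg : forall S, P (g S) = P S.
  move=> S; rewrite /g; case: ifP => PS //; by case: (H S PS) => ->.
have E : (\sum_(S | P S) sg S = - \sum_(S | P S) sg S)%R.
  rewrite {1}(reindex_inj (inv_inj gK)) /= -sumrN.
  apply: eq_big => S; first exact: Pg.
  move=> PgS; have PS : P S by rewrite -Pg.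
  by rewrite /g PS; case: (H S PS) => _ [_ ->].
move/eqP: E; rewrite -subr_eq0 opprK -mulr2n mulrn_eq0 /= => /eqP; done.
Qed.

Lemma GWP W S : reflect [/\ S \subset W, (forall a c y, a \in S -> c \in S -> y \in W -> a < y -> y < c -> y \in S)
   & (forall a x c, a \in S -> x \in S -> c \in S -> a < x -> x < c -> False)] (GW W S).
Proof.
apply: (iffP and3P) => [[? /convWP ? /interior0P ?]|[? ? ?]]; split => //; [exact/convWP|exact/interior0P].
Qed.

Lemma DnP W S y : reflect (y \in W /\ exists2 s, s \in S & y < s) (y \in Dn W S).
Proof.
rewrite inE; apply: (iffP andP) => [[yW /existsP[s /andP[sS ys]]]|[yW [s sS ys]]].
  by split=> //; exists s.
by split=> //; apply/existsP; exists s; rewrite sS.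
Qed.

Lemma E0_key W S m0 : GW W S -> m0 \in W -> (forall y, y \in W -> ~~ (y < m0)) ->
  GW W (tog S (odflt m0 [pick e in CandOf (Dn W S)])) /\
  Dn W (tog S (odflt m0 [pick e in CandOf (Dn W S)])) = Dn W S.
Proof.
move=> /GWP[SW cvS inS] m0W m0min.
have SWi : forall s, s \in S -> s \in W by move=> s; apply/subsetP.
case: pickP => [e|] /=.
  rewrite inE => /andP[/DnP[eW [s0 s0S es0]] /forallP emax].
  have emax' : forall y, y \in W -> (exists2 s, s \in S & y < s) -> ~~ (e < y).
    by move=> y yW ys; have := emax y; rewrite (_ : y \in Dn W S) //; apply/DnP.
  rewrite /tog; case: ifP => eS.
  - split.
      apply/GWP; split.
      + by apply/subsetP => y; rewrite !inE => /andP[_ /SWi].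
      + move=> a c y; rewrite !inE => /andP[_ aS] /andP[_ cS] yW ay yc.
        rewrite (cvS a c y) // andbT; apply/eqP => ye; subst y.
        exact: inS aS eS cS ay yc.
      + move=> a x c; rewrite !inE => /andP[_ aS] /andP[_ xS] /andP[_ cS].
        exact: inS.
    apply/setP => y; apply/DnP/DnP => [[yW [s]]|[yW [s sS ys]]].
      by rewrite !inE => /andP[_ sS] ys; split => //; exists s.
    split => //; case: (eqVneq s e) => [se|sne].
      subst s; exists s0; last exact: lt_trans ys es0.
      by rewrite !inE s0S andbT; apply/eqP => s0e; subst s0; rewrite ltxx in es0.
    by exists s; rewrite // !inE sne.
  - split.
      apply/GWP; split.
      + by apply/subsetP => y; rewrite !inE => /orP[/eqP->|/SWi].
      + move=> a c y; rewrite !inE => /orP[/eqP->|aS] /orP[/eqP->|cS] yW ay yc.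
        * by have := lt_trans ay yc; rewrite ltxx.
        * by have := emax' y yW (ex_intro2 _ _ c cS yc); rewrite ay.
        * by rewrite (cvS a s0 y) ?orbT // (lt_trans yc es0).
        * by rewrite (cvS a c y) ?orbT.
      + move=> a x c; rewrite !inE => aS' xS' cS' ax xc.
        case/orP: xS' => [/eqP xe|xS].
          subst x; case/orP: aS' => [/eqP ae|aS]; first by subst a; rewrite ltxx in ax.
          by rewrite (cvS a s0 e) in eS.
        case/orP: cS' => [/eqP ce|cS].
          subst c; case/orP: aS' => [/eqP ae|aS].
            by subst a; have := lt_trans ax xc; rewrite ltxx.
          exact: inS aS xS s0S ax (lt_trans xc es0).
        case/orP: aS' => [/eqP ae|aS]; last exact: inS aS xS cS ax xc.
        subst a; by have := emax' x (SWi x xS) (ex_intro2 _ _ c cS xc); rewrite ax.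
    apply/setP => y; apply/DnP/DnP => [[yW [s]]|[yW [s sS ys]]].
      rewrite !inE => /orP[/eqP->|sS] ys; split => //; last by exists s.
      by exists s0 => //; exact: lt_trans ys es0.
    by split => //; exists s; rewrite // !inE sS orbT.
move=> Hnone.
have D0 : Dn W S = set0.
  apply/eqP; apply: contraT => /ex_max[e eD emax].
  have : e \in CandOf (Dn W S).
    rewrite inE eD /=.
    by apply/forallP => y; apply/implyP => yD; apply: emax.
  by rewrite Hnone.
have D0' : Dn W (tog S m0) = set0.
  apply/setP => y; rewrite in_set0; apply/negbTE/negP => /DnP[yW [s]].
  rewrite in_tog; case: eqP => [-> _|_ sS ys]; first by move: (m0min y yW) => /negP.
  suff : y \in Dn W S by rewrite D0 inE.
  by apply/DnP; split => //; exists s.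
split; last by rewrite D0 D0'.
have TW : tog S m0 \subset W.
  by apply/subsetP => y; rewrite in_tog; case: eqP => [->|_ /SWi].
apply/GWP; split => //.
  move=> a c y _ cS yW _ yc; suff : y \in Dn W (tog S m0) by rewrite D0' inE.
  by apply/DnP; split => //; exists c.
move=> a x c aS xS _ ax _; suff : a \in Dn W (tog S m0) by rewrite D0' inE.
by apply/DnP; split; [exact: (subsetP TW) | exists x].
Qed.

Lemma E0 W : (\sum_(S | GW W S) sg S = (W == set0)%:R)%R.
Proof.
case: (set_0Vmem W) => [->|[w wW]].
  rewrite eqxx (big_pred1 set0); first by rewrite /sg cards0.
  move=> S; rewrite /GW subset0 /=; case: eqP => [->|//].
  rewrite /=; apply/andP; split.
    by apply/convWP => a c y; rewrite inE.
  by apply/interior0P => a; rewrite inE.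
have Wn0 : W != set0 by apply/set0Pn; exists w.
rewrite (negbTE Wn0) /=.
case: (@ex_min W Wn0) => m0 m0W m0min.
apply: (@sum_inv _ (fun S => tog S (odflt m0 [pick e in CandOf (Dn W S)]))) => S GS.
have [G' D'] := @E0_key W S m0 GS m0W m0min.
split => //; split; last exact: sg_tog.
by rewrite D' togK.
Qed.

Lemma ds_convexE S : ds_convex S = convW setT S.
Proof.
apply/idP/idP.
- case/existsP => I /existsP [J /and3P[/forallP Ii /forallP Jf /eqP ->]].
  apply/convWP => a c y; rewrite !inE => /norP[aI aJ] /norP[cI cJ] _ ay yc.
  apply/norP; split; apply/negP => H.
  + move/forallP: (Ii y) => /(_ a) /implyP; rewrite H (ltW ay) => /(_ isT).
    by rewrite (negbTE aI).
  + move/forallP: (Jf y) => /(_ c) /implyP; rewrite H (ltW yc) => /(_ isT).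
    by rewrite (negbTE cJ).
- move=> /convWP cv.
  pose J := [set y | (y \notin S) && [exists s in S, s <= y]].
  pose I := [set y | (y \notin S) && ~~ [exists s in S, s <= y]].
  apply/existsP; exists I; apply/existsP; exists J; apply/and3P; split.
  + apply/forallP => x; apply/forallP => y; apply/implyP => /andP[]; rewrite !inE => /andP[xS xup] yx.
    apply/andP; split.
    * apply/negP => yS; move/negP: xup; apply; apply/existsP; exists y; by rewrite yS yx.
    * apply/negP => /existsP[s /andP[sS sy]]; move/negP: xup; apply; apply/existsP; exists s.
      by rewrite sS (le_trans sy yx).
  + apply/forallP => x; apply/forallP => y; apply/implyP => /andP[]; rewrite !inE => /andP[xS /existsP[s /andP[sS sx]]] xy.
    apply/andP; split; last by apply/existsP; exists s; rewrite sS (le_trans sx xy).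
    apply/negP => yS.
    have sx' : s < x by rewrite lt_neqAle sx andbT; apply/eqP => e; subst s; rewrite sS in xS.
    have xy' : x < y by rewrite lt_neqAle xy andbT; apply/eqP => e; subst y; rewrite yS in xS.
    by move: (cv s y x sS yS (in_setT x) sx' xy'); rewrite (negbTE xS).
  + apply/eqP/setP => y; rewrite !inE; case: (y \in S) => //=.
    by case: [exists s in S, s <= y].
Qed.

Lemma GW_sub W W' S : W' \subset W -> convW W W' -> GW W' S = GW W S && (S \subset W').
Proof.
move=> /subsetP sub /convWP cvW'; apply/idP/idP.
- move=> /GWP[SW' cv inS]; rewrite SW' andbT; apply/GWP; split => //.
  + by apply/subsetP => y /(subsetP SW') /sub.
  + move=> a c y aS cS yW ay yc; apply: (cv a c y) => //.
    by apply: (cvW' a c y) => //; apply: (subsetP SW').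
- move=> /andP[/GWP[SW cv inS] SW']; apply/GWP; split => //.
  by move=> a c y aS cS /sub yW ay yc; apply: (cv a c y).
Qed.

Lemma eq0P (A : {set T}) : reflect (forall y, y \in A = false) (A == set0).
Proof.
by apply: (iffP eqP) => [-> y|H]; [rewrite inE | apply/setP => y; rewrite H inE].
Qed.

Lemma sum_ext W' x : x \in W' -> convW W' (W' :\ x) ->
  (\sum_(S | GW W' S && (x \in S)) sg S = - ((W' :\ x == set0)%:R))%R.
Proof.
move=> xW cv.
have := E0 W'; rewrite (bigID (fun S => x \in S)) /=.
have -> : (\sum_(S | GW W' S && (x \notin S)) sg S = \sum_(S | GW (W' :\ x) S) sg S)%R.
  apply: eq_bigl => S; rewrite (@GW_sub W' (W' :\ x)) ?subD1set // subsetD1.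
  by case GS: (GW W' S) => //=; move/and3P: GS => [-> _ _].
rewrite E0.
have -> : (W' == set0) = false by apply/negbTE/set0Pn; exists x.
by move/eqP; rewrite addr_eq0 => /eqP.
Qed.

Lemma Fx_equiv x T0 : (convW setT (x |: T0) && (interior (x |: T0) == [set x])) && (x \notin T0)
   = GW (~: [set x]) T0 && ~~ convW setT T0.
Proof.
apply/idP/idP.
- move=> /andP[/andP[/convWP cv /eqP intx] xT].
  have xin : x \in interior (x |: T0) by rewrite intx inE.
  case/interiorP: xin => _ [a [c [aT cT ax xc]]].
  have aT' : a \in T0.
    by move: aT; rewrite !inE => /orP[/eqP ae|//]; subst a; rewrite ltxx in ax.
  have cT' : c \in T0.
    by move: cT; rewrite !inE => /orP[/eqP ce|//]; subst c; rewrite ltxx in xc.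
  apply/andP; split.
  + apply/GWP; split.
    * by apply/subsetP => y yT; rewrite !inE; apply/eqP => yx; subst y; rewrite yT in xT.
    * move=> a' c' y aT2 cT2; rewrite !inE => yx ay yc.
      have := cv a' c' y; rewrite !inE aT2 cT2 !orbT => /(_ isT isT isT ay yc).
      by rewrite (negbTE yx).
    * move=> a' z c' aT2 zT cT2 az zc.
      have : z \in interior (x |: T0).
        by apply/interiorP; split; [rewrite inE zT orbT| exists a', c'; rewrite !inE aT2 cT2 !orbT].
      by rewrite intx inE => /eqP zx; subst z; rewrite zT in xT.
  + apply/negP => /convWP cvT.
    by have := cvT a c x aT' cT' (in_setT x) ax xc; rewrite (negbTE xT).
- move=> /andP[/GWP[Tsub cvT inT] ncv].
  have xT : x \notin T0.
    by apply/negP => /(subsetP Tsub); rewrite !inE eqxx.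
  have [a [c [aT cT ax xc]]] : exists a c, [/\ a \in T0, c \in T0, a < x & x < c].
    case: (boolP [exists a, exists c, [&& a \in T0, c \in T0, a < x & x < c]]).
      by move=> /existsP[a /existsP[c /and4P[? ? ? ?]]]; exists a, c.
    move=> H; exfalso; move/negP: ncv; apply; apply/convWP => a c y aT cT _ ay yc.
    case: (eqVneq y x) => [yx|ynx].
      subst y; case/negP: H; apply/existsP; exists a; apply/existsP; exists c.
      by rewrite aT cT ay yc.
    by apply: (cvT a c y) => //; rewrite !inE.
  have lowT : forall u, u \in x |: T0 -> exists2 u', u' \in T0 & u' < u \/ u' = u.
    move=> u; rewrite !inE => /orP[/eqP->|uT]; [by exists a; [|left] | by exists u; [|right]].
  have highT : forall u, u \in x |: T0 -> exists2 u', u' \in T0 & u < u' \/ u' = u.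
    move=> u; rewrite !inE => /orP[/eqP->|uT]; [by exists c; [|left] | by exists u; [|right]].
  have wit : forall a' y c', a' \in x |: T0 -> c' \in x |: T0 -> a' < y -> y < c' ->
      exists a'' c'', [/\ a'' \in T0, c'' \in T0, a'' < y & y < c''].
    move=> a' y c' /lowT[a'' a''T ha] /highT[c'' c''T hc] ay yc; exists a'', c''; split => //.
      by case: ha => [h|->] //; exact: lt_trans h ay.
    by case: hc => [h|->] //; exact: lt_trans yc h.
  rewrite xT andbT; apply/andP; split.
  + apply/convWP => a' c' y aT2 cT2 _ ay yc.
    rewrite !inE; case: (eqVneq y x) => [->|ynx]; first by [].
    case: (wit a' y c' aT2 cT2 ay yc) => a'' [c'' [a''T c''T ay' yc']].
    by rewrite (cvT a'' c'' y) ?orbT // !inE.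
  + apply/eqP/setP => z; rewrite inE; apply/idP/idP.
    * case/interiorP => zT [a' [c' [aT2 cT2 az zc]]].
      apply/negPn/negP => zx.
      have zT0 : z \in T0 by move: zT; rewrite !inE (negbTE zx).
      case: (wit a' z c' aT2 cT2 az zc) => a'' [c'' [a''T c''T ay' yc']].
      exact: inT a''T zT0 c''T ay' yc'.
    * move/eqP->; apply/interiorP; split; first by rewrite !inE eqxx.
      by exists a, c; rewrite !inE aT cT !orbT.
Qed.

Lemma GW_compl x T0 : GW (~: [set x]) T0 && convW setT T0 = GW setT T0 && (x \notin T0).
Proof.
apply/idP/idP.
- move=> /andP[/GWP[Tsub _ inT] cv]; apply/andP; split.
    apply/GWP; split; [exact: subsetT | by move/convWP: cv | done].
  by apply/negP => /(subsetP Tsub); rewrite !inE eqxx.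
- move=> /andP[/GWP[_ cv inT] xT]; apply/andP; split; last by apply/convWP.
  apply/GWP; split => //.
    by apply/subsetP => y yT; rewrite !inE; apply/eqP => yx; subst y; rewrite yT in xT.
  by move=> a c y aT cT _; apply: cv.
Qed.

Lemma Fx_sum x : (\sum_(S | convW setT S && (interior S == [set x])) sg S = - (bottleneck x)%:R)%R.
Proof.
have step1 : (\sum_(S | convW setT S && (interior S == [set x])) sg S =
    - \sum_(T0 | GW (~: [set x]) T0 && ~~ convW setT T0) sg T0)%R.
  rewrite (reindex_onto (fun T0 => x |: T0) (fun S => S :\ x)) /=; last first.
    move=> S /andP[_ /eqP iS]; apply: setD1K.
    have : x \in interior S by rewrite iS inE.
    by case/interiorP.
  rewrite -sumrN; apply: eq_big => T0.
    rewrite -Fx_equiv; congr (_ && _).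
    case: (boolP (x \in T0)) => xT.
      apply/negbTE/negP => /eqP E.
      have : x \in (x |: T0) :\ x by rewrite E.
      by rewrite !inE eqxx.
    apply/eqP/setP => y; rewrite !inE; case: eqP => [->|//]; by rewrite (negbTE xT).
  move=> /andP[_ /eqP E].
  have xT : x \notin T0 by rewrite -E !inE eqxx.
  by rewrite /sg cardsU1 xT add1n exprS mulN1r.
have step2 : (\sum_(T0 | GW (~: [set x]) T0) sg T0 =
   \sum_(T0 | GW setT T0 && (x \notin T0)) sg T0 +
   \sum_(T0 | GW (~: [set x]) T0 && ~~ convW setT T0) sg T0)%R.
  rewrite (bigID (convW setT)) /=; congr (_ + _)%R.
  by apply: eq_bigl => T0; rewrite GW_compl.
have step3 : (\sum_(T0 | GW setT T0) sg T0 = \sum_(T0 | GW setT T0 && (x \in T0)) sg T0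
   + \sum_(T0 | GW setT T0 && (x \notin T0)) sg T0)%R.
  exact: (bigID (fun T0 : {set T} => x \in T0)).
have Tn0 : (setT : {set T}) == set0 = false by apply/negbTE/set0Pn; exists x.
rewrite E0 Tn0 /= in step3.
rewrite E0 in step2.
pose Wd := [set y | ~~ (y < x)].
pose Wu := [set y | ~~ (x < y)].
pose Wn := Wd :&: Wu.
have xWd : x \in Wd by rewrite inE ltxx.
have xWu : x \in Wu by rewrite inE ltxx.
have xWn : x \in Wn by rewrite inE xWd xWu.
have cvd : convW setT Wd.
  apply/convWP => a c y; rewrite !inE => ax _ _ ay yc; apply/negP => yx.
  by move/negP: ax; apply; exact: lt_trans ay yx.
have cvu : convW setT Wu.
  apply/convWP => a c y; rewrite !inE => _ xc _ ay yc; apply/negP => xy.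
  by move/negP: xc; apply; exact: lt_trans xy yc.
have cvn : convW setT Wn.
  apply/convWP => a c y; rewrite !inE => /andP[ax _] /andP[_ xc] _ ay yc.
  apply/andP; split; apply/negP => h.
    by move/negP: ax; apply; exact: lt_trans ay h.
  by move/negP: xc; apply; exact: lt_trans h yc.
have cvd' : convW Wd (Wd :\ x).
  apply/convWP => a c y; rewrite !inE => /andP[_ ax] _ yW ay yc; rewrite yW andbT.
  by apply/eqP => yx; subst y; rewrite ay in ax.
have cvu' : convW Wu (Wu :\ x).
  apply/convWP => a c y; rewrite !inE => _ /andP[_ xc] yW ay yc; rewrite yW andbT.
  by apply/eqP => yx; subst y; rewrite yc in xc.
have cvn' : convW Wn (Wn :\ x).
  apply/convWP => a c y; rewrite !inE => /andP[_ /andP[ax _]] _ yW ay yc; rewrite yW andbT.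
  by apply/eqP => yx; subst y; rewrite ay in ax.
have HW : forall W', x \in W' -> convW setT W' -> convW W' (W' :\ x) ->
   (\sum_(T0 | GW setT T0 && (x \in T0) && (T0 \subset W')) sg T0 = - ((W' :\ x == set0)%:R))%R.
  move=> W' xW cv cv'; rewrite -(@sum_ext W' x xW cv'); apply: eq_bigl => T0.
  by rewrite (@GW_sub setT W') ?subsetT // andbAC.
have claim : forall T0, GW setT T0 && (x \in T0) -> (T0 \subset Wd) || (T0 \subset Wu).
  move=> T0 /andP[/GWP[_ _ inT] xT]; apply: contraT => /norP[/subsetPn[a aT aW] /subsetPn[c cT cW]].
  move: aW cW; rewrite !inE !negbK => ax xc.
  by case: (inT a x c aT xT cT ax xc).
have h1 : (\sum_(T0 | GW setT T0 && (x \in T0)) sg T0 =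
   \sum_(T0 | GW setT T0 && (x \in T0) && (T0 \subset Wd)) sg T0 +
   \sum_(T0 | GW setT T0 && (x \in T0) && ~~ (T0 \subset Wd)) sg T0)%R.
  exact: (bigID (fun T0 : {set T} => T0 \subset Wd)).
have h2 : (\sum_(T0 | GW setT T0 && (x \in T0) && (T0 \subset Wu)) sg T0 =
   \sum_(T0 | GW setT T0 && (x \in T0) && (T0 \subset Wu) && (T0 \subset Wd)) sg T0 +
   \sum_(T0 | GW setT T0 && (x \in T0) && (T0 \subset Wu) && ~~ (T0 \subset Wd)) sg T0)%R.
  exact: (bigID (fun T0 : {set T} => T0 \subset Wd)).
have h3 : (\sum_(T0 | GW setT T0 && (x \in T0) && ~~ (T0 \subset Wd)) sg T0 =
     \sum_(T0 | GW setT T0 && (x \in T0) && (T0 \subset Wu) && ~~ (T0 \subset Wd)) sg T0)%R.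
  apply: eq_bigl => T0; case P0: (GW setT T0 && (x \in T0)) => //=.
  by have := claim T0 P0; case: (T0 \subset Wd); case: (T0 \subset Wu).
have h4 : (\sum_(T0 | GW setT T0 && (x \in T0) && (T0 \subset Wu) && (T0 \subset Wd)) sg T0 =
     \sum_(T0 | GW setT T0 && (x \in T0) && (T0 \subset Wn)) sg T0)%R.
  by apply: eq_bigl => T0; rewrite subsetI -andbA [(T0 \subset Wu) && _]andbC.
rewrite h3 in h1; rewrite h4 in h2.
rewrite (HW Wd) // in h1; rewrite (HW Wu) // (HW Wn) // in h2.
rewrite step1.
set p := (~: [set x] == set0) in step2.
set dd := (Wd :\ x == set0) in h1.
set uu := (Wu :\ x == set0) in h2.
set nn := (Wn :\ x == set0) in h2.
have Hp : p = dd && uu.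
  rewrite /p /dd /uu; apply/idP/idP.
    move/eq0P => H; apply/andP; split; apply/eq0P => y; rewrite !inE;
      by have := H y; rewrite !inE => /negbFE ->.
  move=> /andP[/eq0P Hd /eq0P Hu]; apply/eq0P => y; rewrite !inE.
  apply/negbTE/negP => yx; have := Hd y; have := Hu y; rewrite !inE yx /= => /negbFE xy /negbFE yx'.
  by have := lt_trans xy yx'; rewrite ltxx.
have Hdn : dd -> nn.
  rewrite /dd /nn => /eq0P H; apply/eq0P => y; rewrite !inE; have := H y; rewrite !inE.
  by case: (y == x); case: (y < x); case: (x < y).
have Hun : uu -> nn.
  rewrite /uu /nn => /eq0P H; apply/eq0P => y; rewrite !inE; have := H y; rewrite !inE.
  by case: (y == x); case: (y < x); case: (x < y).
have Hb : bottleneck x = nn && ~~ dd && ~~ uu.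
  have cmpE : forall y, (x >=< y) = (y == x) || (y < x) || (x < y).
    move=> y; rewrite /Order.comparable !le_eqVlt eq_sym; by case: (y == x); case: (y < x); case: (x < y).
  rewrite /bottleneck /nn /dd /uu; apply/idP/idP.
    move=> /andP[/andP[/existsP[a ax] /existsP[c xc]] /forallP cmp].
    apply/andP; split; [apply/andP; split|].
    - apply/eq0P => y; rewrite !inE; have := cmp y; rewrite cmpE.
      by case: (y == x); case: (y < x); case: (x < y).
    - apply/set0Pn; exists c; rewrite !inE (lt_gtF xc) andbT; apply/eqP => e; subst c; by rewrite ltxx in xc.
    - apply/set0Pn; exists a; rewrite !inE (lt_gtF ax) andbT; apply/eqP => e; subst a; by rewrite ltxx in ax.
  move=> /andP[/andP[/eq0P Hn /set0Pn[c cin]] /set0Pn[a ain]].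
  move: cin ain; rewrite !inE => /andP[ncx cx] /andP[nax ax].
  have := Hn c; have := Hn a; rewrite !inE ncx nax cx ax /= ?andbT => /negbFE a_x /negbFE xc.
  apply/andP; split; [apply/andP; split|].
  - by apply/existsP; exists a.
  - by apply/existsP; exists c.
  - apply/forallP => y; rewrite cmpE; have := Hn y; rewrite !inE.
    by case: (y == x); case: (y < x); case: (x < y).
rewrite Hb.
move: step2 step3 h1 h2; rewrite Hp.
move: Hdn Hun; clear Hp Hb; clearbody p dd uu nn; case: dd; case: uu; case: nn => /= hd hu; try (by move: (hd isT)); try (by move: (hu isT)); lia.
Qed.
End Aux.

Local Open Scope ring_scope.

Theorem theorem4p9 (d : Order.disp_t) (T : finPOrderType d) :
  \sum_(S : {set T} | ds_convex S && (#|interior S| == 1)%N)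
     (-1 : int) ^+ #|S| = - (#|@bottlenecks d T|%:Z).
Proof.
transitivity (\sum_(S : {set T} | convW setT S && (#|interior S| == 1)%N) sg S).
  by apply: eq_big => S; [rewrite ds_convexE | ].
transitivity (\sum_(x : T) \sum_(S : {set T} | convW setT S && (interior S == [set x])) sg S).
  symmetry.
  rewrite (exchange_big_dep (fun S : {set T} => convW setT S && (#|interior S| == 1)%N)) /=; last first.
    by move=> x S _ /andP[-> /eqP ->]; rewrite cards1.
  apply: eq_bigr => S /andP[C /cards1P[x0 E]].
  rewrite (big_pred1 x0) // => x /=; rewrite C E /=.
  by apply/eqP/eqP => [/set1_inj -> //|->].
rewrite (eq_bigr (fun x => - (bottleneck x)%:R)); last by move=> x _; exact: Fx_sum.
rewrite sumrN -natr_sum; congr (- _).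
rewrite -sum1_card /bottlenecks.
rewrite natz; congr Posz.
rewrite [RHS]big_mkcond /=; apply: eq_bigr => x _; rewrite inE.
by case: (bottleneck x).
Qed.
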